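(* Let $B\in\mathbb{R}^{n\times n}$ be a nonsingular $M$-matrix and $C\in\mathbb{R}^{n\times n}$ an $M$-matrix such that $B^{-1}C\ge 0$, and suppose that $B-C-I$ is a nonsingular $M$-matrix. Let $\Phi$ be the maximal nonpositive solvent of $X^2+BX+C=0$ and $\Psi$ the maximal nonpositive solvent of the dual equation $CY^2+BY+I=0$ (these exist under the stated hypotheses). Let $u\in\mathbb{R}^n$ be any positive vector such that $v:=(B-C-I)u>0$. Then: (a) $\Phi\le -B^{-1}C\le 0$, $-\Phi u\le u-B^{-1}v$, $\Psi\le -B^{-1}\le 0$, and $-\Psi u\le u-B^{-1}v$; (b) $\rho(\Phi)<1$ and $\rho(\Psi)<1$; (c) $I-\Phi\Psi$ and $I-\Psi\Phi$ are nonsingular $M$-matrices.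
   Context: $\rho(\cdot)$ denotes spectral radius. Inequalities between matrices and vectors are entrywise; a vector is positive if all entries are positive. A matrix is nonpositive if all its entries are $\le 0$. A solvent of a matrix equation is a matrix solution; the maximal nonpositive solvent is a nonpositive solvent $\Phi$ with $X\le\Phi$ entrywise for every nonpositive solvent $X$. A $Z$-matrix is a real square matrix with nonpositive off-diagonal entries; a $Z$-matrix $A=sI-N$ with $N\ge 0$ is an $M$-matrix if $s\ge\rho(N)$ and a nonsingular $M$-matrix if $s>\rho(N)$. *)

(* Defs.v *)
From HB Require Import structures.
From mathcomp Require Import all_boot all_order all_algebra.
From mathcomp Require Import complex.
Set Implicit Arguments. Unset Strict Implicit. Unset Printing Implicit Defensive.
Import Order.TTheory GRing.Theory Num.Theory.
Local Open Scope ring_scope.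

Definition mxle (R : rcfType) m n (A B : 'M[R]_(m, n)) : Prop :=
  forall i j, A i j <= B i j.
Definition mxpos (R : rcfType) m n (A : 'M[R]_(m, n)) : Prop :=
  forall i j, 0 < A i j.

(* Complex eigenvalues (with multiplicity) of a real square matrix: the
   roots of its characteristic polynomial over R[i]. *)
Definition eigsC (R : rcfType) n (A : 'M[R]_n) : seq R[i] :=
  proj1_sig (closed_field_poly_normal (char_poly (map_mx (real_complex R) A))).

(* Spectral radius: max modulus of the complex eigenvalues (0 if n = 0). *)
Definition spectral_radius (R : rcfType) n (A : 'M[R]_n) : R :=
  \big[Num.max/0]_(z <- eigsC A) ComplexField.Normc.normc z.

Definition Mmatrix (R : rcfType) n (A : 'M[R]_n) : Prop :=
  exists (s : R) (N : 'M[R]_n),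
    mxle 0 N /\ A = s%:M - N /\ spectral_radius N <= s.
Definition nonsingular_Mmatrix (R : rcfType) n (A : 'M[R]_n) : Prop :=
  exists (s : R) (N : 'M[R]_n),
    mxle 0 N /\ A = s%:M - N /\ spectral_radius N < s.

Definition max_nonpos_solvent_quad (R : rcfType) n (B C Phi : 'M[R]_n) : Prop :=
  [/\ Phi *m Phi + B *m Phi + C = 0, mxle Phi 0 &
      forall X : 'M[R]_n, X *m X + B *m X + C = 0 -> mxle X 0 -> mxle X Phi].

Definition max_nonpos_solvent_dual (R : rcfType) n (B C Psi : 'M[R]_n) : Prop :=
  [/\ C *m (Psi *m Psi) + B *m Psi + 1%:M = 0, mxle Psi 0 &
      forall Y : 'M[R]_n, C *m (Y *m Y) + B *m Y + 1%:M = 0 -> mxle Y 0 ->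
        mxle Y Psi].

(* Main.v *)
Require Import Defs.
From HB Require Import structures.
From mathcomp Require Import all_boot all_order all_algebra.
From mathcomp Require Import complex.
From mathcomp Require Import reals.
From mathcomp Require Import classical_sets.
From mathcomp Require Import ring lra.
From Stdlib Require Classical_Prop.
Import Order.TTheory GRing.Theory Num.Theory.
Local Open Scope ring_scope.

Module Helpers.
Set Implicit Arguments. Unset Strict Implicit. Unset Printing Implicit Defensive.

Section MxLe.
Variable R : rcfType.

Lemma mxle_refl m n (A : 'M[R]_(m,n)) : mxle A A.
Proof. by move=> i j. Qed.

Lemma mxle_trans m n (A B C : 'M[R]_(m,n)) : mxle A B -> mxle B C -> mxle A C.
Proof. by move=> h1 h2 i j; apply: le_trans (h1 i j) (h2 i j). Qed.

Lemma mxleD m n (A B C D : 'M[R]_(m,n)) : mxle A B -> mxle C D -> mxle (A + C) (B + D).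
Proof. by move=> h1 h2 i j; rewrite !mxE lerD. Qed.

Lemma mxleN m n (A B : 'M[R]_(m,n)) : mxle A B -> mxle (- B) (- A).
Proof. by move=> h i j; rewrite !mxE lerN2. Qed.

Lemma mxle_sub0 m n (A B : 'M[R]_(m,n)) : mxle A B <-> mxle 0 (B - A).
Proof.
split=> h i j; move: (h i j); rewrite !mxE ?subr_ge0 //.
Qed.

Lemma mxle0_mul m n p (A : 'M[R]_(m,n)) (B : 'M[R]_(n,p)) :
  mxle 0 A -> mxle 0 B -> mxle 0 (A *m B).
Proof.
move=> hA hB i j; rewrite !mxE; apply: sumr_ge0 => k _.
by apply: mulr_ge0; [move: (hA i k) | move: (hB k j)]; rewrite mxE.
Qed.

Lemma mxle_mull m n p (A : 'M[R]_(m,n)) (B C : 'M[R]_(n,p)) :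
  mxle 0 A -> mxle B C -> mxle (A *m B) (A *m C).
Proof.
move=> hA /mxle_sub0 hBC; apply/mxle_sub0; rewrite -mulmxBr.
exact: mxle0_mul.
Qed.

Lemma mxle_mulr m n p (A B : 'M[R]_(m,n)) (C : 'M[R]_(n,p)) :
  mxle 0 C -> mxle A B -> mxle (A *m C) (B *m C).
Proof.
move=> hC /mxle_sub0 hAB; apply/mxle_sub0; rewrite -mulmxBl.
exact: mxle0_mul.
Qed.

Lemma mxle_nonpos_mul m n p (A : 'M[R]_(m,n)) (B : 'M[R]_(n,p)) :
  mxle A 0 -> mxle B 0 -> mxle 0 (A *m B).
Proof.
move=> hA hB; have -> : A *m B = (- A) *m (- B) by rewrite mulNmx mulmxN opprK.
by apply: mxle0_mul => i j; [move: (hA i j) | move: (hB i j)]; rewrite !mxE oppr_ge0.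
Qed.

Lemma mxle0N m n (A : 'M[R]_(m,n)) : mxle A 0 <-> mxle 0 (- A).
Proof. by split=> h i j; move: (h i j); rewrite !mxE ?oppr_ge0. Qed.

Lemma mxpos_ge0 m n (A : 'M[R]_(m,n)) : mxpos A -> mxle 0 A.
Proof. by move=> h i j; rewrite mxE ltW. Qed.

Lemma mxle0P m n (A : 'M[R]_(m,n)) : mxle 0 A <-> forall i j, 0 <= A i j.
Proof. by split=> h i j; move: (h i j); rewrite mxE. Qed.

Lemma mxle_0P m n (A : 'M[R]_(m,n)) : mxle A 0 <-> forall i j, A i j <= 0.
Proof. by split=> h i j; move: (h i j); rewrite mxE. Qed.

Lemma mxle1 n : mxle 0 (1%:M : 'M[R]_n).
Proof. by move=> i j; rewrite !mxE ler0n. Qed.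

End MxLe.

Section Zmat.
Variable R : realType.

Definition zmx n (A : 'M[R]_n) := forall i j, i != j -> A i j <= 0.

Lemma zmx_pos n (A : 'M[R]_n) (y : 'cV[R]_n) :
  zmx A -> mxle 0 y -> mxpos (A *m y) -> mxpos y.
Proof.
move=> hA hy hAy i j; rewrite [j]ord1.
have := hy i 0; rewrite mxE le_eqVlt => /orP[/eqP h0|//].
have := hAy i 0; rewrite mxE (bigD1 i) //= -h0 mulr0 add0r.
rewrite ltNge => /negP H; exfalso; apply: H; apply: sumr_le0 => k hk.
apply: mulr_le0_ge0; first by apply: hA; rewrite eq_sym.
by move: (hy k 0); rewrite mxE.
Qed.

Lemma zmx_mono n p (A : 'M[R]_n) (x : 'cV[R]_n) (Y : 'M[R]_(n,p)) :
  zmx A -> mxpos x -> mxpos (A *m x) -> mxle 0 (A *m Y) -> mxle 0 Y.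
Proof.
move=> hA hx hAx hAY i j; rewrite mxE; case: (leP 0 (Y i j)) => // hneg; exfalso.
pose F k := Y k j / x k 0.
have xpos k : 0 < x k 0 by apply: hx.
have [i0 _ Hmin] := @arg_minP _ _ _ i xpredT F erefl.
set c := - F i0.
have Fi : F i < 0 by rewrite /F ltr_pdivrMr // mul0r.
have cpos : 0 < c by rewrite /c oppr_gt0; apply: le_lt_trans (Hmin i erefl) Fi.
have hz k : 0 <= Y k j + c * x k 0.
  have := Hmin k erefl; rewrite -/c -[F i0]opprK -/c /F ler_pdivlMr //.
  move=> h; lra.
have hz0 : Y i0 j + c * x i0 0 = 0.
  by rewrite /c /F mulNr divfK ?gt_eqF // addrN.
have hS : \sum_k A i0 k * (Y k j + c * x k 0) = (A *m Y) i0 j + c * (A *m x) i0 0.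
  rewrite !mxE mulr_sumr -big_split; apply: eq_bigr => l _ /=.
  by rewrite mulrDr mulrCA.
have h1 : 0 < \sum_k A i0 k * (Y k j + c * x k 0).
  rewrite hS; apply: ltr_wpDl; first by move/mxle0P: hAY; apply.
  by apply: mulr_gt0 => //; apply: hAx.
have h2 : \sum_k A i0 k * (Y k j + c * x k 0) <= 0.
  rewrite (bigD1 i0) //= hz0 mulr0 add0r; apply: sumr_le0 => l hl.
  apply: mulr_le0_ge0; last exact: hz.
  by apply: hA; rewrite eq_sym.
by move: (lt_le_trans h1 h2); rewrite ltxx.
Qed.

Lemma zmx_unit n (A : 'M[R]_n) (x : 'cV[R]_n) :
  zmx A -> mxpos x -> mxpos (A *m x) -> A \in unitmx.
Proof.
move=> hA hx hAx; rewrite unitmxE unitfE -det_tr; apply/negP => /det0P [v vn0 hv].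
have hAv : A *m v^T = 0 by rewrite -[A]trmxK -trmx_mul hv trmx0.
have h1 : mxle 0 v^T by apply: (zmx_mono hA hx hAx); rewrite hAv; apply: mxle_refl.
have h2 : mxle 0 (- v^T) by apply: (zmx_mono hA hx hAx); rewrite mulmxN hAv oppr0; apply: mxle_refl.
move/eqP: vn0; apply; apply/matrixP => a b; rewrite mxE.
have := h1 b a; have := h2 b a; rewrite !mxE oppr_ge0 => p q; apply/eqP; rewrite eq_le p q.
done.
Qed.

Lemma zmx_inv_ge0 n (A : 'M[R]_n) (x : 'cV[R]_n) :
  zmx A -> mxpos x -> mxpos (A *m x) -> mxle 0 (invmx A).
Proof.
move=> hA hx hAx; apply: (zmx_mono hA hx hAx).
rewrite mulmxV; first exact: mxle1.
exact: zmx_unit hA hx hAx.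
Qed.

End Zmat.


Section Spec.
Local Open Scope complex_scope.
Variable R : realType.
Local Notation normc := (@ComplexField.Normc.normc R).
Local Notation toC := (real_complex R).

Lemma normc_ge0 (x : R[i]) : 0 <= normc x.
Proof. by case: x => a b; rewrite /= sqrtr_ge0. Qed.

Lemma normc_gt0 (x : R[i]) : x != 0 -> 0 < normc x.
Proof.
move=> xn0; rewrite lt_def normc_ge0 andbT; apply: contra xn0 => /eqP h.
by apply/eqP; apply: ComplexField.Normc.eq0_normc.
Qed.

Lemma normc_real (a : R) : normc (a%:C) = `|a|.
Proof. by rewrite /= expr0n /= addr0 sqrtr_sqr. Qed.

Lemma normc_sum (I : finType) (F : I -> R[i]) :
  normc (\sum_i F i) <= \sum_i normc (F i).
Proof.
elim/big_rec2: _ => [|i y1 y2 _ IH].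
  by rewrite ComplexField.Normc.normc0.
apply: le_trans (le_normcD (R:=R) _ _) _; exact: lerD.
Qed.

Lemma eigsC_root n (A : 'M[R]_n) z :
  (z \in eigsC A) = root (char_poly (map_mx toC A)) z.
Proof.
rewrite /eigsC; case: closed_field_poly_normal => r /= Hr.
by rewrite Hr (monicP (char_poly_monic _)) scale1r root_prod_XsubC.
Qed.

Lemma le_bigmax_seq (s : seq R[i]) z : z \in s ->
  normc z <= \big[Num.max/0]_(x <- s) normc x.
Proof.
elim: s => // a s IH; rewrite in_cons big_cons => /orP[/eqP ->|/IH h].
  by rewrite le_max lexx.
by rewrite le_max h orbT.
Qed.

Lemma lt_bigmax_seq (s : seq R[i]) c : 0 < c -> (forall z, z \in s -> normc z < c) ->
  \big[Num.max/0]_(x <- s) normc x < c.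
Proof.
move=> c0; elim: s => [|a s IH] h; first by rewrite big_nil.
rewrite big_cons gt_max h ?mem_head //= IH // => z hz; apply: h.
by rewrite in_cons hz orbT.
Qed.

Lemma le_rho n (A : 'M[R]_n) z : z \in eigsC A -> normc z <= spectral_radius A.
Proof. exact: le_bigmax_seq. Qed.

Lemma eig_row n (A : 'M[R]_n) z (v : 'rV[R[i]]_n) :
  v != 0 -> v *m map_mx toC A = z *: v -> z \in eigsC A.
Proof.
move=> vn0 hv; rewrite eigsC_root -eigenvalue_root_char; apply/eigenvalueP.
by exists v.
Qed.

Lemma eig_col n (A : 'M[R]_n) z : z \in eigsC A ->
  exists2 w : 'rV[R[i]]_n, w != 0 & w *m (map_mx toC A)^T = z *: w.
Proof.
rewrite eigsC_root -eigenvalue_root_char => /eigenvalueP [v hv vn0].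
have : \det (map_mx toC A - z%:M) == 0.
  by apply/det0P; exists v => //; rewrite mulmxBr hv mul_mx_scalar subrr.
rewrite -det_tr => /det0P [w wn0 hw]; exists w => //.
move: hw; rewrite raddfB /= tr_scalar_mx mulmxBr mul_mx_scalar => /eqP.
by rewrite subr_eq0 => /eqP.
Qed.

Lemma unit_shift n (N : 'M[R]_n) t : spectral_radius N < t -> (t%:M - N) \in unitmx.
Proof.
move=> ht; rewrite unitmxE unitfE; apply/negP => /det0P [v vn0 hv].
have hvN : v *m N = t *: v.
  by move/eqP: hv; rewrite mulmxBr mul_mx_scalar subr_eq0 => /eqP <-.
have v'n0 : map_mx toC v != 0.
  apply: contra vn0 => /eqP h; apply/eqP/matrixP => a b.
  move/matrixP: h => /(_ a b); rewrite !mxE -(rmorph0 toC) => /complexI.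
  done.
have := @eig_row _ N (t%:C) _ v'n0.
rewrite -map_mxM hvN map_mxZ => /(_ erefl) /le_rho; rewrite normc_real => h.
have := le_lt_trans h ht; rewrite ltNge ler_norm //.
Qed.

Lemma rho_lt1_w n (A : 'M[R]_n) (u : 'cV[R]_n) : mxpos u ->
  (forall i, \sum_j `|A i j| * u j 0 < u i 0) -> spectral_radius A < 1.
Proof.
move=> hu hA; apply: lt_bigmax_seq => // z /eig_col [w wn0 hw].
have hwi i : \sum_j w 0 j * (A i j)%:C = z * w 0 i.
  move/matrixP: hw => /(_ 0 i); rewrite !mxE => <-.
  by apply: eq_bigr => j _; rewrite !mxE.
have [j0 hj0] : exists j, w 0 j != 0.
  apply/existsP; apply: contraR wn0; rewrite negb_exists => /forallP h.
  apply/eqP/matrixP => a b; rewrite [a]ord1 mxE; apply/eqP; move: (h b).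
  by rewrite negbK.
pose F j := normc (w 0 j) / u j 0.
have upos j : 0 < u j 0 by apply: hu.
have [i0 _ Hmax] := @arg_maxP _ _ _ j0 xpredT F erefl.
pose m := F i0.
have mpos : 0 < m.
  apply: lt_le_trans (Hmax j0 erefl); rewrite /F divr_gt0 //; exact: normc_gt0.
have hb j : normc (w 0 j) <= m * u j 0.
  by rewrite -ler_pdivrMr //; apply: Hmax.
have hm : normc (w 0 i0) = m * u i0 0 by rewrite /m /F divfK // gt_eqF.
have key : normc z * normc (w 0 i0) < normc (w 0 i0).
  rewrite -ComplexField.Normc.normcM -hwi.
  apply: le_lt_trans (normc_sum _) _.
  apply: (@le_lt_trans _ _ (m * \sum_j `|A i0 j| * u j 0)).
    rewrite mulr_sumr; apply: ler_sum => j _.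
    rewrite ComplexField.Normc.normcM normc_real mulrC.
    by rewrite mulrCA; apply: ler_wpM2l => //; rewrite mulrC.
  by rewrite hm ltr_pM2l //; apply: hA.
have wpos : 0 < normc (w 0 i0) by rewrite hm mulr_gt0.
by move: key; rewrite -{2}[normc (w 0 i0)]mul1r ltr_pM2r.
Qed.

End Spec.


Section Good.
Variable R : realType.

Definition good n (N : 'M[R]_n) t :=
  exists x : 'cV[R]_n, mxpos x /\ mxpos ((t%:M - N) *m x).

Lemma shiftE n (N : 'M[R]_n) t (x : 'cV[R]_n) i j :
  ((t%:M - N) *m x) i j = t * x i j - (N *m x) i j.
Proof. by rewrite mulmxBl mul_scalar_mx !mxE. Qed.

Lemma shift_zmx n (N : 'M[R]_n) t : mxle 0 N -> zmx (t%:M - N).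
Proof.
move=> hN i j hij; rewrite !mxE (negPf hij) mulr0n sub0r oppr_le0.
by move/mxle0P: hN; apply.
Qed.

Lemma good_up n (N : 'M[R]_n) t t' : good N t -> t <= t' -> good N t'.
Proof.
move=> [x [hx hAx]] htt'; exists x; split => // i j.
have := hAx i j; have := hx i j; rewrite !shiftE => h1 h2.
have : t * x i j <= t' * x i j by rewrite ler_pM2r.
lra.
Qed.

Lemma row_le_total n (N : 'I_n -> 'I_n -> R) (i : 'I_n) :
  (forall i j, 0 <= N i j) -> \sum_j N i j <= \sum_i \sum_j N i j.
Proof.
move=> h; rewrite [X in _ <= X](bigD1 i) //= lerDl.
by apply: sumr_ge0 => k _; apply: sumr_ge0 => l _.
Qed.

Lemma good_big n (N : 'M[R]_n) : mxle 0 N -> good N (1 + \sum_i \sum_j N i j).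
Proof.
move=> hN; exists (const_mx 1); split => [i j|i j]; first by rewrite mxE ltr01.
rewrite shiftE.
have -> : (N *m const_mx 1) i j = \sum_k N i k.
  by rewrite mxE; apply: eq_bigr => k _; rewrite mxE mulr1.
rewrite mxE mulr1.
have := row_le_total i (proj1 (mxle0P N) hN); lra.
Qed.

Lemma nsM_good n (N : 'M[R]_n) s : mxle 0 N -> spectral_radius N < s -> good N s.
Proof.
case: n N => [|n] N hN hs.
  by exists 0; split => -[].
apply: Classical_Prop.NNPP => ngs.
pose t0 := 1 + \sum_(i < n.+1) \sum_(j < n.+1) N i j.
pose T : set R := fun t => s <= t /\ ~ good N t.
have Ts : T s by split.
have ub t : T t -> t <= t0.
  move=> [_ ngt]; case: (lerP t t0) => // h; exfalso; apply: ngt.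
  by apply: good_up (good_big hN) (ltW h).
have hsup : has_sup T by split; [exists s | exists t0 => t Tt; apply: ub].
pose t1 := sup T.
have t1s : s <= t1 by apply: sup_upper_bound.
have above t : t1 < t -> good N t.
  move=> ht; apply: Classical_Prop.NNPP => ngt.
  have : t <= t1 by apply: sup_upper_bound => //; split => //; apply: le_trans (ltW ht).
  by rewrite leNgt ht.
have hU : (t1%:M - N) \in unitmx by apply: unit_shift; apply: lt_le_trans hs t1s.
pose F := invmx (t1%:M - N).
pose K := 1 + \sum_i \sum_j `|F i j|.
have K0 : 0 < K.
  by rewrite /K ltr_pwDl //; apply: sumr_ge0 => i _; apply: sumr_ge0 => j _.
pose d := (4 * K)^-1.
have d0 : 0 < d by rewrite invr_gt0 mulr_gt0.
have hKd : K * d = 4^-1 by rewrite /d invfM mulrCA divff ?gt_eqF // mulr1.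
have [x [hx hAx]] : good N (t1 + d) by apply: above; rewrite ltrDl.
pose A := (t1 + d)%:M - N.
have hzA : zmx A by apply: shift_zmx.
have hUA : A \in unitmx by apply: zmx_unit hzA hx hAx.
pose one := (const_mx 1 : 'cV[R]_n.+1).
pose y := invmx A *m one.
have hAy : A *m y = one by rewrite mulmxA mulmxV // mul1mx.
have one0 : mxpos one by move=> i j; rewrite mxE ltr01.
have y0 : mxle 0 y by apply: (zmx_mono hzA hx hAx); rewrite hAy; apply: mxpos_ge0.
have ypos : mxpos y by apply: (zmx_pos hzA y0); rewrite hAy.
clearbody y.
have hy : (t1%:M - N) *m y = one - d *: y.
  apply/matrixP => i j; rewrite shiftE !mxE.
  have := congr1 (fun M : 'cV_n.+1 => M i j) hAy; rewrite /= shiftE !mxE.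
  lra.
have hyF : y = F *m (one - d *: y) by rewrite -hy mulmxA mulVmx // mul1mx.
have [i0 _ Hmax] := @arg_maxP _ _ _ ord0 xpredT (fun i => y i 0) erefl.
pose ym := y i0 0.
have ypos' j : 0 <= y j 0 by apply: ltW; apply: ypos.
have bound : ym <= K * (1 + d * ym).
  rewrite /ym {1}hyF mxE.
  apply: (@le_trans _ _ (\sum_j `|F i0 j| * (1 + d * ym))).
    apply: ler_sum => j _; rewrite !mxE.
    apply: le_trans (ler_norm _) _; rewrite normrM; apply: ler_wpM2l => //.
    rewrite ler_norml; have := Hmax j erefl; have := ypos' j => h1 h2.
    have : d * y j 0 <= d * ym by rewrite ler_pM2l.
    have : 0 <= d * y j 0 by rewrite mulr_ge0 // ltW.
    move=> p q; apply/andP; split; lra.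
  rewrite -mulr_suml; apply: ler_wpM2r.
    by apply: addr_ge0 => //; apply: mulr_ge0; [exact: ltW | exact: ypos'].
  rewrite /K; apply: le_trans (@row_le_total _ (fun i j => `|F i j|) i0 _) _.
    by move=> *.
  by rewrite lerDr.
have ym43 : ym <= 4 / 3 * K.
  move: bound; rewrite mulrDr mulr1 mulrA hKd => h; lra.
have dym : d * ym <= 3^-1.
  apply: le_trans (_ : d * (4 / 3 * K) <= _).
    by rewrite ler_pM2l.
  have -> : d * (4 / 3 * K) = 3^-1.
    rewrite /d; field.
    by rewrite gt_eqF.
  done.
have gd : good N (t1 - d).
  exists y; split => // i j; rewrite [j]ord1 shiftE mxE.
  have := congr1 (fun M : 'cV_n.+1 => M i 0) hy; rewrite /= shiftE !mxE => hh.
  have : d * y i 0 <= d * ym by rewrite ler_pM2l //; apply: Hmax.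
  lra.
have [e [_ nge] he] := sup_adherent d0 hsup.
by apply: nge; apply: good_up gd (ltW he).
Qed.

End Good.


Lemma fin_uniform (I : finType) (Pk : I -> nat -> Prop) :
  (forall i k l, (k <= l)%N -> Pk i k -> Pk i l) -> (forall i, exists k, Pk i k) ->
  exists K, forall i, Pk i K.
Proof.
move=> mono ex.
suff [K HK] : exists K, forall i, i \in enum I -> Pk i K.
  by exists K => i; apply: HK; rewrite mem_enum.
elim: (enum I) => [|a s [K HK]]; first by exists 0%N.
have [k hk] := ex a; exists (maxn k K) => i; rewrite in_cons => /orP [/eqP -> | hi].
  exact: mono (leq_maxl k K) hk.
exact: mono (leq_maxr k K) (HK i hi).
Qed.

Lemma zmod_id3 (V : zmodType) (a b c : V) : a = c + (a - b) + (b - c).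
Proof. by rewrite addrC addrA subrK addrC subrK. Qed.

Section FP.
Variable R : realType.

Lemma eps_le (x y c : R) : 0 <= c -> (forall e, 0 < e -> x <= y + e * c) -> x <= y.
Proof.
move=> c0 h; apply/ler_addgt0Pr => e e0.
have c1 : 0 < c + 1 by lra.
have := h (e / (c + 1)) (divr_gt0 e0 c1).
have : e / (c + 1) * c <= e.
  by rewrite mulrAC ler_pdivrMr // ler_pM2l //; lra.
lra.
Qed.

Lemma FP n (P Q : 'M[R]_n) (u : 'cV[R]_n) : mxle 0 P -> mxle 0 Q -> mxpos u ->
  mxle ((P + Q) *m u) u ->
  exists L, [/\ mxle 0 L, L = P *m (L *m L) + Q & mxle (L *m u) ((P + Q) *m u)].
Proof.
move=> hP hQ hu hbu.
pose T (X : 'M[R]_n) := P *m (X *m X) + Q.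
have Tge0 X : mxle 0 X -> mxle 0 (T X).
  by move=> hX; rewrite -[0]addr0; apply: mxleD => //; apply: mxle0_mul => //; apply: mxle0_mul.
have Tmono X Y : mxle 0 X -> mxle X Y -> mxle (T X) (T Y).
  move=> hX hXY; apply: mxleD; last exact: mxle_refl.
  apply: mxle_mull => //; apply: mxle_trans (mxle_mull hX hXY) _.
  by apply: mxle_mulr => //; apply: mxle_trans hXY.
pose X k := iter k T 0.
have X0 k : mxle 0 (X k).
  by elim: k => [|k IH]; [apply: mxle_refl | rewrite /X iterS; apply: Tge0].
have Xinc k : mxle (X k) (X k.+1).
  elim: k => [|k IH]; first exact: X0.
  exact: (Tmono _ _ (X0 k) IH).
have Xmono k l : (k <= l)%N -> mxle (X k) (X l).
  move/subnK => <-; elim: (l - k)%N => [|m IH]; first exact: mxle_refl.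
  by rewrite addSn; apply: mxle_trans IH (Xinc _).
have upos i : 0 < u i 0 by apply: hu.
have b0 : mxle 0 ((P + Q) *m u).
  by apply: mxle0_mul; [rewrite -[0]addr0; apply: mxleD | apply: mxpos_ge0].
have Xu k : mxle (X k *m u) ((P + Q) *m u).
  elim: k => [|k IH]; first by rewrite mul0mx.
  rewrite /X iterS -/(X k) /T mulmxDl -mulmxA mulmxDl.
  apply: mxleD; last exact: mxle_refl.
  apply: mxle_mull => //; rewrite -mulmxA.
  apply: mxle_trans (_ : mxle _ (X k *m u)) (mxle_trans IH hbu).
  by apply: mxle_mull => //; apply: mxle_trans IH hbu.
have Xb k i j : X k i j <= u i 0 / u j 0.
  rewrite ler_pdivlMr //.
  apply: (@le_trans _ _ ((X k *m u) i 0)).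
    rewrite mxE (bigD1 j) //= lerDl; apply: sumr_ge0 => l _.
    by apply: mulr_ge0; [move/mxle0P: (X0 k); apply | apply: ltW].
  apply: le_trans (Xu k i 0) _; exact: hbu.
pose E i j : set R := fun r => exists k, r = X k i j.
have hsup i j : has_sup (E i j).
  split; first by exists (X 0%N i j), 0%N.
  by exists (u i 0 / u j 0) => r [k ->]; apply: Xb.
pose L := \matrix_(i, j) sup (E i j).
have Lup k i j : X k i j <= L i j.
  by rewrite mxE; apply: sup_upper_bound => //; exists k.
have Lle i j c : (forall k, X k i j <= c) -> L i j <= c.
  move=> h; rewrite mxE; apply: ge_sup; first by exists (X 0%N i j), 0%N.
  by move=> r [k ->].
have XL k : mxle (X k) L by move=> i j; apply: Lup.
have L0 : mxle 0 L by apply: mxle_trans (X0 0%N) (XL 0%N).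
pose J := (const_mx 1 : 'M[R]_n).
have J0 : mxle 0 J by apply/mxle0P => i j; rewrite mxE ler01.
have approx e : 0 < e -> exists K, mxle L (X K + e *: J).
  move=> e0.
  have ex : forall p : 'I_n * 'I_n, exists k, L p.1 p.2 - e < X k p.1 p.2.
    move=> p; have [r [k ->] hr] := sup_adherent e0 (hsup p.1 p.2).
    by exists k; rewrite mxE.
  have [K HK] := @fin_uniform _ (fun p k => L p.1 p.2 - e < X k p.1 p.2)
    (fun p k l hkl h => lt_le_trans h (Xmono k l hkl p.1 p.2)) ex.
  exists K => i j; have := HK (i, j); rewrite /= !mxE mulr1; lra.
have LT : mxle L (T L).
  move=> i j; apply: Lle => -[|k]; first exact: (Tge0 _ L0 i j).
  exact: (Tmono _ _ (X0 k) (XL k) i j).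
have TL : mxle (T L) L.
  pose M := P *m (L *m J + J *m L).
  have M0 : mxle 0 M by apply: mxle0_mul => //; rewrite -[0]addr0; apply: mxleD; apply: mxle0_mul.
  move=> i j; apply: (@eps_le _ _ (M i j)); first by move/mxle0P: M0; apply.
  move=> e e0; have [K HK] := approx e e0.
  pose D := L - X K.
  have D0 : mxle 0 D by exact: (proj1 (mxle_sub0 _ _) (XL K)).
  have DJ : mxle D (e *: J).
    by move=> a b; have := HK a b; rewrite !mxE; lra.
  have hLL : mxle (L *m L) (X K *m X K + e *: (L *m J + J *m L)).
    rewrite {1}(zmod_id3 (L *m L) (L *m X K) (X K *m X K)) -addrA.
    apply: mxleD; first exact: mxle_refl.
    rewrite -mulmxBr -mulmxBl -/D scalerDr; apply: mxleD.
      by rewrite scalemxAr; apply: mxle_mull.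
    rewrite scalemxAl; apply: mxle_trans (mxle_mull D0 (XL K)) _.
    exact: mxle_mulr.
  have : mxle (T L) (X K.+1 + e *: M).
    rewrite /X iterS -/(X K) /T /M scalemxAr -addrA [Q + _]addrC addrA -mulmxDr.
    by apply: mxleD; [apply: mxle_mull | apply: mxle_refl].
  clear M0; move: (T L) (X K.+1) M (Lup K.+1 i j) => TL' A B hA hh.
  have := hh i j; rewrite !mxE => h; apply: le_trans h _.
  by rewrite lerD2r; move: hA; rewrite mxE.
exists L; split => //.
  by apply/matrixP => i j; apply/eqP; rewrite eq_le; apply/andP; split;
     [apply: LT | apply: TL].
move=> i j; rewrite [j]ord1.
apply: (@eps_le _ _ ((J *m u) i 0)).
  by have := mxle0_mul J0 (mxpos_ge0 hu); move/mxle0P; apply.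
move=> e e0; have [K HK] := approx e e0.
have := mxle_mulr (mxpos_ge0 hu) HK; rewrite mulmxDl -scalemxAl.
have hX := Xu K.
move: (L *m u) (X K *m u) (J *m u) ((P + Q) *m u) hX => a b c d hX hh.
have := hh i 0; have := hX i 0; rewrite !mxE; lra.
Qed.

End FP.

Lemma solve3 (V : zmodType) (a x c : V) : a + x + c = 0 -> x = - a - c.
Proof. by move/eqP; rewrite addr_eq0 => /eqP h; rewrite -[x](addKr a) h. Qed.
Lemma id4 (V : zmodType) (a p q : V) : a - (a - p - q) = q + p.
Proof. by rewrite !opprB addrCA [a + _]addrCA subrr addr0. Qed.

Section Cor.
Variable R : realType.

Lemma rho_nonneg n (A : 'M[R]_n) (u : 'cV[R]_n) : mxle 0 A -> mxpos u ->
  (forall i, (A *m u) i 0 < u i 0) -> spectral_radius A < 1.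
Proof.
move=> hA hu h; apply: (rho_lt1_w hu) => i; apply: le_lt_trans (h i).
rewrite mxE; apply: ler_sum => j _; rewrite ger0_norm //; by move/mxle0P: hA.
Qed.

Lemma rho_nonpos n (A : 'M[R]_n) (u : 'cV[R]_n) : mxle A 0 -> mxpos u ->
  (forall i, (- (A *m u)) i 0 < u i 0) -> spectral_radius A < 1.
Proof.
move=> hA hu h; apply: (rho_lt1_w hu) => i; apply: le_lt_trans (h i).
rewrite !mxE -sumrN; apply: ler_sum => j _; rewrite ler0_norm ?mulNr //.
by move/mxle_0P: hA.
Qed.

End Cor.

End Helpers.
Import Helpers.

Theorem theorem3p4 (R : realType) (n : nat) (B C Phi Psi : 'M[R]_n)
  (u : 'cV[R]_n) :
  nonsingular_Mmatrix B ->
  Mmatrix C ->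
  mxle 0 (invmx B *m C) ->
  nonsingular_Mmatrix (B - C - 1%:M) ->
  max_nonpos_solvent_quad B C Phi ->
  max_nonpos_solvent_dual B C Psi ->
  mxpos u ->
  mxpos ((B - C - 1%:M) *m u) ->
  let v := (B - C - 1%:M) *m u in
  (* (a) *)
  ((mxle Phi (- (invmx B *m C)) /\ mxle (- (invmx B *m C)) 0) /\
   mxle (- (Phi *m u)) (u - invmx B *m v) /\
   (mxle Psi (- invmx B) /\ mxle (- invmx B) 0) /\
   mxle (- (Psi *m u)) (u - invmx B *m v)) /\
  (* (b) *)
  (spectral_radius Phi < 1 /\ spectral_radius Psi < 1) /\
  (* (c) *)
  (nonsingular_Mmatrix (1%:M - Phi *m Psi) /\
   nonsingular_Mmatrix (1%:M - Psi *m Phi)).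
Proof.
move=> hB _ hBC _ [hPhi1 hPhi2 hPhi3] [hPsi1 hPsi2 hPsi3] hu hv v.
case: hB => s [N [hN [hBdef hrho]]].
have [x [hx hBx]] := nsM_good hN hrho; rewrite -hBdef in hBx.
have hzB : zmx B by rewrite hBdef; apply: shift_zmx.
have hUB : B \in unitmx := zmx_unit hzB hx hBx.
have hBi0 : mxle 0 (invmx B) := zmx_inv_ge0 hzB hx hBx.
have hBBi : B *m invmx B = 1%:M by rewrite mulmxV.
have hBiB : invmx B *m B = 1%:M by rewrite mulVmx.
move: (invmx B) hBi0 hBC hBBi hBiB => Bi hBi0 hBC hBBi hBiB.
have Biv0 : mxle 0 (Bi *m v) := mxle0_mul hBi0 (mxpos_ge0 hv).
have Bivpos : mxpos (Bi *m v).
  by apply: (zmx_pos hzB Biv0); rewrite mulmxA hBBi mul1mx.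
have hb : u - Bi *m v = (Bi + Bi *m C) *m u.
  rewrite /v mulmxA !mulmxBr hBiB mulmx1 !mulmxBl mul1mx mulmxDl.
  by rewrite id4.
have hbu : mxle (u - Bi *m v) u.
  by move=> i j; have := Biv0 i j; rewrite !mxE; lra.
have hblt i : (u - Bi *m v) i 0 < u i 0.
  by have := Bivpos i 0; rewrite !mxE; lra.
move: (u - Bi *m v) hb hbu hblt => b hb hbu hblt.
have hPQ1 : mxle ((Bi + Bi *m C) *m u) u by rewrite -hb.
have [L1 [L10 L1eq L1u]] := FP hBi0 hBC hu hPQ1.
have sol1 : (- L1) *m (- L1) + B *m (- L1) + C = 0.
  rewrite mulNmx mulmxN opprK mulmxN.
  have -> : B *m L1 = L1 *m L1 + C by rewrite {1}L1eq -mulmxDr mulmxA hBBi mul1mx.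
  by rewrite opprD addrA subrr add0r addNr.
have hL1 : mxle (- L1) Phi by apply: hPhi3 => //; apply/mxle0N; rewrite opprK.
have nPhi0 : mxle 0 (- Phi) by apply/mxle0N.
have hPhiu : mxle (- (Phi *m u)) b.
  rewrite -mulNmx hb; apply: mxle_trans L1u; apply: mxle_mulr; first exact: mxpos_ge0.
  by rewrite -[L1]opprK; apply: mxleN.
have ePhi : Phi = - (Bi *m (Phi *m Phi)) - Bi *m C.
  by rewrite -{1}[Phi]mul1mx -hBiB -mulmxA (solve3 hPhi1) mulmxBr mulmxN.
have hPQ2 : mxle ((Bi *m C + Bi) *m u) u by rewrite addrC -hb.
have [L2 [L20 L2eq L2u]] := FP hBC hBi0 hu hPQ2.
have sol2 : C *m ((- L2) *m (- L2)) + B *m (- L2) + 1%:M = 0.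
  rewrite !(mulNmx, mulmxN) opprK.
  have -> : B *m L2 = C *m (L2 *m L2) + 1%:M.
    by rewrite {1}L2eq -mulmxA mulmxDr !mulmxA hBBi !mul1mx.
  by rewrite opprD addrA subrr add0r addNr.
have hL2 : mxle (- L2) Psi by apply: hPsi3 => //; apply/mxle0N; rewrite opprK.
have nPsi0 : mxle 0 (- Psi) by apply/mxle0N.
have hPsiu : mxle (- (Psi *m u)) b.
  rewrite -mulNmx hb addrC; apply: mxle_trans L2u; apply: mxle_mulr; first exact: mxpos_ge0.
  by rewrite -[L2]opprK; apply: mxleN.
have ePsi : Psi = - ((Bi *m C) *m (Psi *m Psi)) - Bi.
  rewrite -{1}[Psi]mul1mx -hBiB -[(Bi *m B) *m Psi]mulmxA (solve3 hPsi1) mulmxBr mulmxN mulmx1.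
  by rewrite [Bi *m (C *m _)]mulmxA.
have PhiPhi0 : mxle 0 (Phi *m Phi) by apply: mxle_nonpos_mul.
have PsiPsi0 : mxle 0 (Psi *m Psi) by apply: mxle_nonpos_mul.
have hbu' i : (b i 0 < u i 0) := hblt i.
have prod_bound (F G : 'M[R]_n) : mxle 0 (- F) -> mxle 0 (- G) ->
    mxle (- (F *m u)) b -> mxle (- (G *m u)) b -> mxle (F *m G *m u) b.
  move=> hF hG hFu hGu.
  have -> : F *m G *m u = (- F) *m (- (G *m u)) by rewrite mulNmx mulmxN opprK mulmxA.
  apply: mxle_trans (mxle_mull hF hGu) _.
  apply: mxle_trans (mxle_mull hF hbu) _.
  by rewrite mulNmx.
split.
  split.
    split; last by apply/mxle0N; rewrite opprK.
    rewrite {1}ePhi -[X in mxle _ X]add0r; apply: mxleD; last exact: mxle_refl.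
    by apply/mxle0N; rewrite opprK; apply: mxle0_mul.
  split => //; split => //.
  split; last by apply/mxle0N; rewrite opprK.
  rewrite {1}ePsi -[X in mxle _ X]add0r; apply: mxleD; last exact: mxle_refl.
  by apply/mxle0N; rewrite opprK; apply: mxle0_mul.
split.
  split.
    apply: (rho_nonpos hPhi2 hu) => i; apply: le_lt_trans (hblt i); exact: hPhiu.
  apply: (rho_nonpos hPsi2 hu) => i; apply: le_lt_trans (hblt i); exact: hPsiu.
split.
  exists 1, (Phi *m Psi); split; first exact: mxle_nonpos_mul.
  split => //; apply: (rho_nonneg (mxle_nonpos_mul hPhi2 hPsi2) hu) => i.
  apply: le_lt_trans (hblt i); exact: prod_bound.
exists 1, (Psi *m Phi); split; first exact: mxle_nonpos_mul.
split => //; apply: (rho_nonneg (mxle_nonpos_mul hPsi2 hPhi2) hu) => i.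
apply: le_lt_trans (hblt i); exact: prod_bound.
Qed.
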